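(* Let $k\ge2$ be an integer and $p$ an odd prime not dividing $k$. Let $$F(t)={}_{k-1}F_{k-2}\left(\tfrac1k,\tfrac2k,\ldots,\tfrac{k-1}{k};1,1,\ldots,1\,\middle|\,t\right)=\sum_{n\ge0}\frac{(\frac1k)_n(\frac2k)_n\cdots(\frac{k-1}{k})_n}{(n!)^{k-1}}t^n .$$ Then $F(t)\in\mathbb{Z}_p[[t]]$ and for all integers $s\ge1$, $$\frac{F(t)}{F(t^p)}\equiv \frac{F_{p^s}(t)}{F_{p^{s-1}}(t^p)}\pmod{p^s},$$ as power series in $\mathbb{Z}_p[[t]]$ (coefficientwise).
   Context: $(a)_n=a(a+1)\cdots(a+n-1)$ denotes the Pochhammer symbol; there are $k-1$ upper parameters $\frac1k,\dots,\frac{k-1}k$ and $k-2$ lower parameters all equal to $1$. For a power series $G(t)$ and an integer $m\ge1$, $G_m(t)$ denotes its truncation: all terms of degree $\ge m$ are deleted; $G_m(t^p)$ denotes this truncation with $t$ replaced by $t^p$. *)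

(* Defs.v *)
From mathcomp Require Import all_boot all_algebra.
Set Implicit Arguments. Unset Strict Implicit. Unset Printing Implicit Defensive.
Import GRing.Theory Num.Theory.
Local Open Scope ring_scope.

Definition series := nat -> rat.

Definition pochhammer (a : rat) (n : nat) : rat := \prod_(i < n) (a + i%:R).

Definition hypF (k : nat) : series := fun n =>
  (\prod_(1 <= j < k) pochhammer (j%:R / k%:R) n) / (n`!%:R) ^+ (k - 1).

Definition smul (f g : series) : series :=
  fun n => \sum_(i < n.+1) f i * g (n - i)%N.

(* G_m(t): delete all terms of degree >= m. *)
Definition strunc (m : nat) (f : series) : series :=
  fun n => if (n < m)%N then f n else 0.

Definition subst_pow (p : nat) (f : series) : series :=
  fun n => if (p %| n)%N then f (n %/ p)%N else 0.

(* First n+1 coefficients of the multiplicative inverse of f (f 0 <> 0). *)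
Fixpoint inv_seq (f : series) (n : nat) : seq rat :=
  match n with
  | 0 => [:: (f 0%N)^-1]
  | n'.+1 => let s := inv_seq f n' in
      rcons s (- (\sum_(i < n'.+1) f i.+1 * nth 0 s (n' - i)%N) / f 0%N)
  end.

Definition sinv (f : series) : series := fun n => nth 0 (inv_seq f n) n.

Definition sdiv (f g : series) : series := smul f (sinv g).

Definition p_integral (p : nat) (x : rat) : bool := ~~ (p %| `|denq x|)%N.

Definition congr_mod_pow (p s : nat) (x y : rat) : bool :=
  p_integral p ((x - y) / (p ^ s)%N%:R).

(* Main.v *)
Require Import Defs.
From mathcomp Require Import all_boot all_algebra all_solvable.
From mathcomp Require Import zify ring lra.
Set Implicit Arguments. Unset Strict Implicit. Unset Printing Implicit Defensive.
Import GRing.Theory Num.Theory.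
Local Open Scope ring_scope.


Section PInt.
Variable p : nat.
Hypothesis pP : prime p.

Definition pint (x : rat) := exists (a : int) (b : nat), ~~ (p %| b)%N /\ x = a%:~R / b%:R.

Lemma pintE x : p_integral p x <-> pint x.
Proof.
split.
  move=> H; exists (numq x), `|denq x|%N; split=> //.
  rewrite -[in LHS](divq_num_den x); congr (_ / _).
  by case: (denqP x) => d ->.
case=> a [b [pb ->]].
have b0 : b != 0%N by apply: contraNneq pb => ->.
rewrite /p_integral; apply/negP => pd.
set y := (a%:~R / b%:R : rat).
have e : (numq y) * b%:Z = a * denq y.
  apply/eqP; rewrite -(eqr_int rat) !rmorphM /= numqE /y.
  have bq : (b%:R : rat) != 0 by rewrite pnatr_eq0.
  apply/eqP; rewrite -[((b%:Z)%:~R : rat)]/(b%:R : rat); field; exact: bq.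
have := congr1 absz e; rewrite !abszM /= => e2.
have : (p %| `|numq y| * b)%N by rewrite e2 dvdn_mull.
rewrite Euclid_dvdM // (negbTE pb) orbF => pn.
have := coprime_num_den y.
rewrite /coprime => /eqP g1.
have : (p %| gcdn `|numq y| `|denq y|)%N by rewrite dvdn_gcd pn.
by rewrite g1 dvdn1 => /eqP p1; move: pP; rewrite p1.
Qed.


Lemma ndvd_neq0 b : ~~ (p %| b)%N -> (b%:R : rat) != 0.
Proof. by rewrite pnatr_eq0; apply: contraNneq => ->. Qed.

Lemma pint_int (a : int) : pint a%:~R.
Proof. exists a, 1%N; split; first by rewrite dvdn1; case: (p =P 1%N) pP => // ->.
by rewrite divr1. Qed.

Lemma pint_nat (n : nat) : pint n%:R.
Proof. exact: (pint_int n). Qed.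

Lemma pint0 : pint 0. Proof. exact: (pint_nat 0). Qed.
Lemma pint1 : pint 1. Proof. exact: (pint_nat 1). Qed.

Lemma pintM x y : pint x -> pint y -> pint (x * y).
Proof.
case=> a [b [pb ->]] [c [d [pd ->]]]; exists (a * c), (b * d)%N; split.
  by rewrite Euclid_dvdM // negb_or pb.
have := ndvd_neq0 pb; have := ndvd_neq0 pd => h1 h2.
rewrite natrM rmorphM /=; field; by rewrite h1 h2.
Qed.

Lemma pintD x y : pint x -> pint y -> pint (x + y).
Proof.
case=> a [b [pb ->]] [c [d [pd ->]]]; exists (a * d%:Z + c * b%:Z), (b * d)%N; split.
  by rewrite Euclid_dvdM // negb_or pb.
have := ndvd_neq0 pb; have := ndvd_neq0 pd => h1 h2.
rewrite natrM rmorphD !rmorphM /=.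
rewrite -[((d%:Z)%:~R : rat)]/(d%:R : rat) -[((b%:Z)%:~R : rat)]/(b%:R : rat).
field; by rewrite h1 h2.
Qed.

Lemma pintN x : pint x -> pint (- x).
Proof. case=> a [b [pb ->]]; exists (- a), b; split => //; by rewrite rmorphN mulNr. Qed.

Lemma pintB x y : pint x -> pint y -> pint (x - y).
Proof. by move=> hx hy; apply: pintD => //; apply: pintN. Qed.

Lemma pint_divn x b : ~~ (p %| b)%N -> pint x -> pint (x / b%:R).
Proof.
move=> pb [a [c [pc ->]]]; exists a, (c * b)%N; split.
  by rewrite Euclid_dvdM // negb_or pb pc.
have := ndvd_neq0 pb; have := ndvd_neq0 pc => h1 h2.
rewrite natrM; field; by rewrite h1 h2.
Qed.

Lemma pint_sum I (r : seq I) (P : pred I) (F : I -> rat) :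
  (forall i, P i -> pint (F i)) -> pint (\sum_(i <- r | P i) F i).
Proof. move=> h; apply: big_ind => //; [exact: pint0 | exact: pintD]. Qed.

Lemma pint_prod I (r : seq I) (P : pred I) (F : I -> rat) :
  (forall i, P i -> pint (F i)) -> pint (\prod_(i <- r | P i) F i).
Proof. move=> h; apply: big_ind => //; [exact: pint1 | exact: pintM]. Qed.

Lemma pintX x n : pint x -> pint (x ^+ n).
Proof. by move=> h; elim: n => [|n IH]; [rewrite expr0; exact: pint1 | rewrite exprS; apply: pintM]. Qed.

Definition dv (E : nat) (x : rat) := pint (x / (p ^ E)%N%:R).
Definition cong E x y := dv E (x - y).

Lemma pexp_neq0 E : ((p ^ E)%N%:R : rat) != 0.
Proof. by rewrite pnatr_eq0 -lt0n expn_gt0 prime_gt0. Qed.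

Lemma dv0 E : dv E 0. Proof. by rewrite /dv mul0r; exact: pint0. Qed.

Lemma dvD E x y : dv E x -> dv E y -> dv E (x + y).
Proof. by rewrite /dv mulrDl; apply: pintD. Qed.

Lemma dvN E x : dv E x -> dv E (- x).
Proof. by rewrite /dv mulNr; apply: pintN. Qed.

Lemma dvB E x y : dv E x -> dv E y -> dv E (x - y).
Proof. by move=> h1 h2; apply: dvD => //; apply: dvN. Qed.

Lemma dv_sum E I (r : seq I) (P : pred I) (F : I -> rat) :
  (forall i, P i -> dv E (F i)) -> dv E (\sum_(i <- r | P i) F i).
Proof. move=> h; apply: big_ind => //; [exact: dv0 | exact: dvD]. Qed.

Lemma dvMl E a x : pint a -> dv E x -> dv E (a * x).
Proof. by rewrite /dv -mulrA; apply: pintM. Qed.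

Lemma dvMr E a x : pint a -> dv E x -> dv E (x * a).
Proof. by rewrite mulrC; apply: dvMl. Qed.

Lemma dvMM E F x y : dv E x -> dv F y -> dv (E + F) (x * y).
Proof.
rewrite /dv => h1 h2; have := pintM h1 h2.
have e1 := pexp_neq0 E; have e2 := pexp_neq0 F.
have -> : x * y / (p ^ (E + F))%N%:R = (x / (p ^ E)%N%:R) * (y / (p ^ F)%N%:R).
  rewrite expnD natrM; field; by rewrite e1 e2.
by [].
Qed.

Lemma dv_pint E x : dv E x -> pint x.
Proof.
rewrite /dv => h; have e1 := pexp_neq0 E.
have := pintM h (pint_nat (p ^ E)); by rewrite divfK.
Qed.

Lemma dv0E x : dv 0 x <-> pint x.
Proof. by rewrite /dv expn0 divr1. Qed.

Lemma dv_le E F x : (F <= E)%N -> dv E x -> dv F x.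
Proof.
move=> le h; have e1 := pexp_neq0 E; have e2 := pexp_neq0 F; rewrite /dv.
have -> : x / (p ^ F)%N%:R = (x / (p ^ E)%N%:R) * (p ^ (E - F))%N%:R.
  move: e1; move: (E - F)%N (subnK le) => d <- e1; rewrite expnD natrM; field.
  by rewrite !pexp_neq0.
by apply: pintM => //; apply: pint_nat.
Qed.

Lemma dv_pexp E x : pint x -> dv E ((p ^ E)%N%:R * x).
Proof. by move=> h; rewrite /dv mulrAC divff ?pexp_neq0 ?mul1r. Qed.

Lemma dv_divn E x b : ~~ (p %| b)%N -> dv E x -> dv E (x / b%:R).
Proof. by move=> pb; rewrite /dv mulrAC; apply: pint_divn. Qed.

Lemma cong_refl E x : cong E x x.
Proof. by rewrite /cong subrr; apply: dv0. Qed.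

Lemma cong_sym E x y : cong E x y -> cong E y x.
Proof. by move=> h; rewrite /cong -opprB; apply: dvN. Qed.

Lemma cong_trans E x y z : cong E x y -> cong E y z -> cong E x z.
Proof. by rewrite /cong => h1 h2; have := dvD h1 h2; rewrite addrA subrK. Qed.

Lemma congD E x y x' y' : cong E x x' -> cong E y y' -> cong E (x + y) (x' + y').
Proof. by rewrite /cong => h1 h2; have := dvD h1 h2; rewrite addrACA opprD. Qed.

Lemma congN E x x' : cong E x x' -> cong E (- x) (- x').
Proof. by rewrite /cong -opprD; apply: dvN. Qed.

Lemma congB E x y x' y' : cong E x x' -> cong E y y' -> cong E (x - y) (x' - y').
Proof. by move=> h1 h2; apply: congD => //; apply: congN. Qed.

Lemma congM E x y x' y' : pint x -> pint y' -> cong E x x' -> cong E y y' -> cong E (x * y) (x' * y').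
Proof.
rewrite /cong => px py h1 h2.
have -> : x * y - x' * y' = x * (y - y') + (x - x') * y' by ring.
by apply: dvD; [apply: dvMl | apply: dvMr].
Qed.

Lemma cong_sum E I (r : seq I) (P : pred I) (F G : I -> rat) :
  (forall i, P i -> cong E (F i) (G i)) -> cong E (\sum_(i <- r | P i) F i) (\sum_(i <- r | P i) G i).
Proof. move=> h; rewrite /cong -sumrB; exact: dv_sum. Qed.

Lemma cong_prod E I (r : seq I) (P : pred I) (F G : I -> rat) :
  (forall i, P i -> pint (F i)) -> (forall i, P i -> pint (G i)) ->
  (forall i, P i -> cong E (F i) (G i)) -> cong E (\prod_(i <- r | P i) F i) (\prod_(i <- r | P i) G i).
Proof.
move=> hF hG h; elim: r => [|a r IH]; first by rewrite !big_nil; exact: cong_refl.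
rewrite !big_cons; case: (P a) (hF a) (hG a) (h a) => // ha hb hc.
by apply: congM => //; [exact: ha | apply: pint_prod | exact: hc].
Qed.

Lemma cong_le E F x y : (F <= E)%N -> cong E x y -> cong F x y.
Proof. exact: dv_le. Qed.

Lemma cong_pint E x y : cong E x y -> pint y -> pint x.
Proof. by move=> /dv_pint h hy; have := pintD h hy; rewrite subrK. Qed.

End PInt.


Definition box (B N : nat) (f : nat -> nat -> rat) :=
  \sum_(0 <= i < B) \sum_(0 <= j < B) ((i + j)%N == N)%:R * f i j.

Lemma sum_pick (P c : nat) (F : nat -> rat) : (c < P)%N ->
  \sum_(0 <= i < P) (i == c)%:R * F i = F c.
Proof.
move=> cP; rewrite (bigD1_seq c) ?mem_index_iota ?iota_uniq //= eqxx mul1r.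
rewrite big1_seq ?addr0 // => i /andP[/negbTE -> _]; by rewrite mul0r.
Qed.

Lemma box_eq B N f : (N < B)%N -> box B N f = \sum_(0 <= i < N.+1) f i (N - i)%N.
Proof.
move=> NB; rewrite /box.
transitivity (\sum_(0 <= i < B) if (i <= N)%N then f i (N - i)%N else 0).
  apply: eq_bigr => i _; case: (leqP i N) => h.
    rewrite (bigD1_seq (N - i)%N) ?mem_index_iota ?iota_uniq //=; last by lia.
    rewrite subnKC // eqxx mul1r big1_seq ?addr0 // => j /andP[hj _].
    have /negbTE -> : (i + j != N)%N by apply/eqP => e; move/eqP: hj; apply; lia.
    by rewrite mul0r.
  rewrite big1 // => j _; have /negbTE -> : (i + j != N)%N by apply/eqP => e; lia.
  by rewrite mul0r.
rewrite (@big_cat_nat _ _ _ N.+1) //=.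
rewrite [X in _ + X]big1_seq ?addr0.
  apply: eq_big_seq => i; rewrite mem_index_iota => /andP[_ hi]; by rewrite -ltnS hi.
move=> i /andP[_]; rewrite mem_index_iota => /andP[hi _]; by rewrite leqNgt hi.
Qed.

Lemma split_mul P U (F : nat -> rat) :
  \sum_(0 <= i < P * U) F i = \sum_(0 <= u < U) \sum_(0 <= c < P) F (P * u + c)%N.
Proof.
elim: U => [|U IH]; first by rewrite muln0 !big_geq.
rewrite big_nat_recr //= -IH mulnS addnC (@big_cat_nat _ _ _ (P * U)) //=; last by lia.
congr (_ + _).
rewrite -{1}[(P * U)%N]add0n big_addn addKn; apply: eq_bigr => i _; by rewrite addnC.
Qed.


Section Dwork.
Variable p : nat.
Hypothesis pP : prime p.

Definition DP (X : nat -> rat) :=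
  (forall n, pint p (X n)) /\ (forall n m e, cong p e.+1 (X (n + m * p ^ e)%N) (X n)).

Lemma p_gt0 : (0 < p)%N. Proof. exact: prime_gt0. Qed.
Lemma pexp_gt0 e : (0 < p ^ e)%N. Proof. by rewrite expn_gt0 p_gt0. Qed.

Lemma DP_const c : pint p c -> DP (fun _ => c).
Proof. move=> h; split; [move=> n; exact: h | move=> n m e; exact: (cong_refl pP)]. Qed.

Lemma DP_mul X Y : DP X -> DP Y -> DP (fun n => X n * Y n).
Proof.
case=> hX1 hX2 [hY1 hY2]; split=> [n|n m e]; first exact: (pintM pP).
apply: (congM pP); [exact: hX1 | exact: hY1 | exact: hX2 | exact: hY2].
Qed.

Lemma DP_shift X c t : DP X -> DP (fun n => X (c + p ^ t * n)%N).
Proof.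
case=> h1 h2; split=> [n|n m e] //.
have -> : (c + p ^ t * (n + m * p ^ e) = (c + p ^ t * n) + m * p ^ (t + e))%N.
  by rewrite mulnDr expnD; ring.
by apply: (cong_le pP) (h2 _ _ _); rewrite ltnS leq_addl.
Qed.

Variable A : nat -> rat.
Hypothesis hA : forall n, pint p (A n).
Hypothesis hR : forall b, (b < p)%N -> exists R, DP R /\ forall n, A (b + p * n)%N = A n * R n.

Lemma Pi r c : (c < p ^ r)%N -> exists Pc, DP Pc /\ forall u, A (c + p ^ r * u)%N = A u * Pc u.
Proof.
elim: r c => [|r IH] c.
  rewrite expn0 ltnS leqn0 => /eqP ->; exists (fun _ => 1); split.
    exact: DP_const (pint1 pP).
  by move=> u; rewrite mul1n add0n mulr1.
move=> cp; have := IH (c %/ p)%N; case.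
  by rewrite ltn_divLR ?p_gt0 // -expnSr.
move=> Pc' [hP' eP']; have [R [hR1 eR]] := hR (ltn_pmod c p_gt0).
exists (fun u => Pc' u * R (c %/ p + p ^ r * u)%N); split.
  by apply: DP_mul => //; apply: DP_shift.
move=> u; have -> : (c + p ^ r.+1 * u = c %% p + p * (c %/ p + p ^ r * u))%N.
  by rewrite {1}(divn_eq c p) expnS; ring.
by rewrite eR eP' mulrA.
Qed.

Definition D (Q : nat) (X Y : nat -> rat) (N : nat) :=
  \sum_(0 <= i < N.+1) A i * A (N - i)%N * (((N - i) < Q)%N%:R - (i < Q)%N%:R) * (X i * Y (N - i)%N).

Lemma D_box Q X Y N B : (N < B)%N ->
  D Q X Y N = box B N (fun i j => A i * A j * ((j < Q)%N%:R - (i < Q)%N%:R) * (X i * Y j)).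
Proof. by move=> NB; rewrite box_eq. Qed.

Lemma D_ext Q X Y X' Y' N : (forall i, X i = X' i) -> (forall j, Y j = Y' j) ->
  D Q X Y N = D Q X' Y' N.
Proof. by move=> h1 h2; apply: eq_bigr => i _; rewrite h1 h2. Qed.

Lemma D_sumX Q (r : seq nat) (F : nat -> nat -> rat) Y N :
  D Q (fun i => \sum_(c <- r) F c i) Y N = \sum_(c <- r) D Q (F c) Y N.
Proof.
rewrite /D exchange_big; apply: eq_bigr => i _; rewrite mulr_suml mulr_sumr.
by apply: eq_bigr.
Qed.

Lemma D_sumY Q (r : seq nat) X (F : nat -> nat -> rat) N :
  D Q X (fun j => \sum_(c <- r) F c j) N = \sum_(c <- r) D Q X (F c) N.
Proof.
rewrite /D exchange_big; apply: eq_bigr => i _; rewrite mulr_sumr mulr_sumr.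
by apply: eq_bigr.
Qed.

Lemma D_scaleX Q a X Y N : D Q (fun i => a * X i) Y N = a * D Q X Y N.
Proof. rewrite /D mulr_sumr; apply: eq_bigr => i _; ring. Qed.

Lemma D_scaleY Q a X Y N : D Q X (fun i => a * Y i) N = a * D Q X Y N.
Proof. rewrite /D mulr_sumr; apply: eq_bigr => i _; ring. Qed.

Lemma bool_pint (b : bool) : pint p (b%:R).
Proof. exact: (pint_nat pP). Qed.

Lemma w_pint Q N i : pint p (A i * A (N - i)%N * (((N - i) < Q)%N%:R - (i < Q)%N%:R)).
Proof. by apply: (pintM pP); [apply: (pintM pP) | apply: (pintB pP); apply: bool_pint]. Qed.

Lemma D_dv E1 E2 Q X Y N : (forall i, dv p E1 (X i)) -> (forall j, dv p E2 (Y j)) ->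
  dv p (E1 + E2) (D Q X Y N).
Proof.
move=> h1 h2; apply: (dv_sum pP) => i _; apply: (dvMl pP); first exact: w_pint.
exact: (dvMM pP).
Qed.

Lemma D_congX s Q X X' Y N : (forall i, cong p s (X i) (X' i)) -> (forall j, pint p (Y j)) ->
  cong p s (D Q X Y N) (D Q X' Y N).
Proof.
move=> h1 h2; rewrite /cong /D -sumrB; apply: (dv_sum pP) => i _.
rewrite -mulrBr; apply: (dvMl pP); first exact: w_pint.
by rewrite -mulrBl; apply: (dvMr pP); [exact: h2 | exact: h1].
Qed.

Lemma D_congY s Q X Y Y' N : (forall i, pint p (X i)) -> (forall j, cong p s (Y j) (Y' j)) ->
  cong p s (D Q X Y N) (D Q X Y' N).
Proof.
move=> h1 h2; rewrite /cong /D -sumrB; apply: (dv_sum pP) => i _.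
rewrite -mulrBr; apply: (dvMl pP); first exact: w_pint.
by rewrite -mulrBr; apply: (dvMl pP); [exact: h1 | exact: h2].
Qed.

Lemma D_const Q a b N : D Q (fun _ => a) (fun _ => b) N = 0.
Proof.
rewrite /D; under eq_bigr do rewrite mulrBr mulrBl.
rewrite sumrB; apply/eqP; rewrite subr_eq0; apply/eqP.
rewrite big_nat_rev /=; apply: eq_big_nat => i /andP[_ hi].
rewrite add0n subSS subKn //; ring.
Qed.


Definition Delta (X : nat -> rat) (r n : nat) :=
  X (n %% p ^ r)%N - (if r is r'.+1 then X (n %% p ^ r')%N else 0).

Lemma tele X s n : \sum_(0 <= r < s.+1) Delta X r n = X (n %% p ^ s)%N.
Proof.
elim: s => [|s IH]; first by rewrite big_nat1 /Delta subr0.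
by rewrite big_nat_recr //= IH /Delta addrC subrK.
Qed.

Lemma mod_decomp n r r' : (r' <= r)%N ->
  (n %% p ^ r = n %% p ^ r' + ((n %% p ^ r) %/ p ^ r') * p ^ r')%N.
Proof.
move=> le; rewrite addnC {1}(divn_eq (n %% p ^ r) (p ^ r')); congr (_ + _)%N.
by rewrite modn_dvdm // dvdn_exp2l.
Qed.

Lemma Delta_dv X r n : DP X -> dv p r (Delta X r n).
Proof.
case=> h1 h2; case: r => [|r].
  by rewrite /Delta subr0 /dv expn0 divr1; apply: h1.
by rewrite /Delta (mod_decomp n (leqnSn r)); apply: h2.
Qed.

Lemma Delta_per X r R n : (r <= R)%N -> Delta X r n = Delta X r (n %% p ^ R)%N.
Proof.
move=> le; rewrite /Delta modn_dvdm ?dvdn_exp2l //.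
case: r le => [|r] le //; by rewrite [in RHS]modn_dvdm // dvdn_exp2l // ltnW.
Qed.

Lemma Delta_pint X r n : DP X -> pint p (Delta X r n).
Proof. by move=> h; apply: (dv_pint pP); apply: Delta_dv. Qed.

Lemma lt_mul_add P v d Q' : (d < P)%N -> ((P * v + d < P * Q')%N = (v < Q')%N).
Proof.
move=> dP; case: (ltnP v Q') => h.
  apply: (leq_trans (n := (P * v.+1)%N)); first by rewrite mulnS addnC ltn_add2r.
  by rewrite leq_mul2l h orbT.
apply/negbTE; rewrite -leqNgt; apply: (leq_trans _ (leq_addr _ _)); by rewrite leq_mul2l h orbT.
Qed.

Definition ind (P c : nat) (i : nat) : rat := (c == i %% P)%N%:R.

Lemma box_split P U N (f : nat -> nat -> rat) :
  box (P * U) N f = \sum_(0 <= u < U) \sum_(0 <= c < P) \sum_(0 <= v < U) \sum_(0 <= d < P)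
     ((P * u + c + (P * v + d))%N == N)%:R * f (P * u + c)%N (P * v + d)%N.
Proof.
rewrite /box split_mul; apply: eq_bigr => u _; apply: eq_bigr => c _.
by rewrite split_mul.
Qed.


Lemma ind_mod P c u c' : (c' < P)%N -> ind P c (P * u + c')%N = (c == c')%:R.
Proof. by move=> h; rewrite /ind mulnC modnMDl modn_small. Qed.

Lemma D_ind R Q' c d N (Pc Pd : nat -> rat) :
  (c < p ^ R)%N -> (d < p ^ R)%N ->
  (forall u, A (c + p ^ R * u)%N = A u * Pc u) -> (forall v, A (d + p ^ R * v)%N = A v * Pd v) ->
  D (p ^ R * Q') (ind (p ^ R) c) (ind (p ^ R) d) N =
  if ((c + d <= N) && (p ^ R %| N - (c + d)))%N then D Q' Pc Pd ((N - (c + d)) %/ p ^ R)%N else 0.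
Proof.
move=> cP dP eA1 eA2.
have P0 := pexp_gt0 R; move: cP dP eA1 eA2 P0; move: (p ^ R)%N => P cP dP eA1 eA2 P0.
rewrite (@D_box _ _ _ _ (P * N.+1)%N); last by apply: (leq_trans (ltnSn N)); rewrite leq_pmull.
rewrite box_split.
transitivity (\sum_(0 <= u < N.+1) \sum_(0 <= v < N.+1)
   ((P * u + c + (P * v + d))%N == N)%:R *
   (A (P * u + c)%N * A (P * v + d)%N * (((P * v + d) < P * Q')%N%:R - ((P * u + c) < P * Q')%N%:R))).
  apply: eq_bigr => u _.
  transitivity (\sum_(0 <= c' < P) (c' == c)%:R * \sum_(0 <= v < N.+1) \sum_(0 <= d' < P) (d' == d)%:R *
     (((P * u + c' + (P * v + d'))%N == N)%:R *
     (A (P * u + c')%N * A (P * v + d')%N * (((P * v + d') < P * Q')%N%:R - ((P * u + c') < P * Q')%N%:R)))).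
    apply: eq_big_nat => c' /andP[_ hc']; rewrite mulr_sumr; apply: eq_bigr => v _.
    rewrite mulr_sumr; apply: eq_big_nat => d' /andP[_ hd'].
    rewrite !ind_mod // (eq_sym c c') (eq_sym d d'); ring.
  rewrite sum_pick //; apply: eq_bigr => v _; by rewrite sum_pick.
case: ifP => cond.
  move/andP: cond => [cdN dvd].
  set M := ((N - (c + d)) %/ P)%N.
  have eN : N = (P * M + (c + d))%N by rewrite /M mulnC divnK // subnK.
  have MN : (M < N.+1)%N.
    rewrite ltnS; apply: (leq_trans (leq_pmulr _ P0)); rewrite [X in (_ <= X)%N]eN mulnC; exact: leq_addr.
  rewrite (@D_box _ _ _ _ N.+1) //.
  rewrite /box; apply: eq_bigr => u _; apply: eq_bigr => v _.
  have -> : ((P * u + c + (P * v + d))%N == N) = ((u + v)%N == M).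
    rewrite [in LHS]eN; have -> : (P * u + c + (P * v + d) = P * (u + v) + (c + d))%N by ring.
    by rewrite eqn_add2r eqn_pmul2l.
  rewrite !lt_mul_add // (addnC (P * u)%N) (addnC (P * v)%N) eA1 eA2; ring.
apply: big1 => u _; apply: big1 => v _.
have /negbTE -> : ((P * u + c + (P * v + d))%N != N).
  apply/eqP => e; move: cond; rewrite -e.
  have -> : (P * u + c + (P * v + d) = P * (u + v) + (c + d))%N by ring.
  by rewrite addnK leq_addl dvdn_mulr.
by rewrite mul0r.
Qed.


Lemma dv_sum_nat E m n (F : nat -> rat) : (forall i, (m <= i < n)%N -> dv p E (F i)) ->
  dv p E (\sum_(m <= i < n) F i).
Proof.
move=> h; rewrite big_seq_cond; apply: (dv_sum pP) => i /andP[hi _].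
by apply: h; rewrite -mem_index_iota.
Qed.

Definition Dw s := forall X Y, DP X -> DP Y -> forall N, dv p s (D (p ^ s.-1) X Y N).

Lemma per_sum (rho : nat -> rat) R i : (forall i, rho i = rho (i %% p ^ R)%N) ->
  rho i = \sum_(0 <= c < p ^ R) rho c * ind (p ^ R) c i.
Proof.
move=> h; rewrite (h i) -(sum_pick rho (ltn_pmod i (pexp_gt0 R))).
by apply: eq_bigr => c _; rewrite mulrC.
Qed.

Lemma key s' R rho sigma N : (1 <= R)%N -> (R <= s')%N -> Dw (s'.+1 - R) ->
  (forall i, pint p (rho i)) -> (forall j, pint p (sigma j)) ->
  (forall i, rho i = rho (i %% p ^ R)%N) -> (forall j, sigma j = sigma (j %% p ^ R)%N) ->
  dv p (s'.+1 - R) (D (p ^ s') rho sigma N).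
Proof.
move=> R1 Rs IH hr hs pr ps.
have eQ : (p ^ s' = p ^ R * p ^ (s' - R))%N by rewrite -expnD subnKC.
rewrite eQ (@D_ext _ _ _ (fun i => \sum_(0 <= c < p ^ R) rho c * ind (p ^ R) c i)
                        (fun i => \sum_(0 <= c < p ^ R) sigma c * ind (p ^ R) c i)); last first.
- by move=> j; apply: per_sum.
- by move=> j; apply: per_sum.
rewrite D_sumX; apply: dv_sum_nat => c /andP[_ hc]; rewrite D_scaleX D_sumY.
apply: (dvMl pP); first exact: hr.
apply: dv_sum_nat => d /andP[_ hd]; rewrite D_scaleY; apply: (dvMl pP); first exact: hs.
have [Pc [hPc eA1]] := Pi hc; have [Pd [hPd eA2]] := Pi hd.
rewrite (@D_ind R (p ^ (s' - R))%N c d N Pc Pd hc hd eA1 eA2); case: ifP => _; last exact: (dv0 pP).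
have e : (s'.+1 - R = (s' - R).+1)%N by rewrite subSn.
rewrite e; move: IH; rewrite e /Dw /= => IH; exact: IH.
Qed.


Lemma DP_mod X s i : DP X -> cong p s.+1 (X i) (X (i %% p ^ s)%N).
Proof.
case=> _ h; have := h (i %% p ^ s)%N (i %/ p ^ s)%N s.
by rewrite addnC -divn_eq.
Qed.

Theorem dwork s : (1 <= s)%N -> Dw s.
Proof.
elim/ltn_ind: s => s IH hs X Y hX hY N.
case: s IH hs => [//|s'] IH _ /=.
set Q := (p ^ s')%N.
have c1 : cong p s'.+1 (D Q X Y N) (D Q (fun i => X (i %% p ^ s')%N) (fun j => Y (j %% p ^ s')%N) N).
  apply: (cong_trans pP (y := D Q (fun i => X (i %% p ^ s')%N) Y N)).
    apply: D_congX; [by move=> i; apply: DP_mod | by move=> j; case: hY].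
  apply: D_congY; [by move=> i; case: hX | by move=> j; apply: DP_mod].
suff h2 : dv p s'.+1 (D Q (fun i => X (i %% p ^ s')%N) (fun j => Y (j %% p ^ s')%N) N).
  by have := dvD pP c1 h2; rewrite subrK.
rewrite (@D_ext _ _ _ (fun i => \sum_(0 <= r < s'.+1) Delta X r i)
                      (fun i => \sum_(0 <= r < s'.+1) Delta Y r i)); last first.
- by move=> j; rewrite tele.
- by move=> j; rewrite tele.
rewrite D_sumX; apply: dv_sum_nat => r1 /andP[_ hr1]; rewrite D_sumY.
apply: dv_sum_nat => r2 /andP[_ hr2].
case: (posnP (maxn r1 r2)) => [m0 | mpos].
  have z1 : r1 = 0%N by apply/eqP; rewrite -leqn0 -m0 leq_maxl.
  have z2 : r2 = 0%N by apply/eqP; rewrite -leqn0 -m0 leq_maxr.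
  subst r1 r2.
  rewrite (@D_ext _ _ _ (fun _ => X 0%N) (fun _ => Y 0%N)).
  - by rewrite D_const; exact: (dv0 pP).
  - by move=> i; rewrite /Delta expn0 modn1 subr0.
  - by move=> i; rewrite /Delta expn0 modn1 subr0.
pose R := maxn r1 r2.
have Rs : (R <= s')%N by rewrite geq_max; apply/andP; split; rewrite -ltnS.
have e1 := pexp_neq0 pP r1; have e2 := pexp_neq0 pP r2.
rewrite (@D_ext _ _ _ (fun i => (p ^ r1)%N%:R * (Delta X r1 i / (p ^ r1)%N%:R))
                      (fun i => (p ^ r2)%N%:R * (Delta Y r2 i / (p ^ r2)%N%:R))); last first.
- by move=> j; rewrite mulrC divfK.
- by move=> j; rewrite mulrC divfK.
rewrite D_scaleX D_scaleY mulrA -natrM -expnD.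
have h3 : dv p (s'.+1 - R) (D Q (fun i => Delta X r1 i / (p ^ r1)%N%:R) (fun i => Delta Y r2 i / (p ^ r2)%N%:R) N).
  apply: key => //.
  - apply: IH; first by rewrite ltn_subrL mpos.
    by rewrite subn_gt0 ltnS.
  - by move=> i; apply: Delta_dv.
  - by move=> i; apply: Delta_dv.
  - by move=> i; rewrite (@Delta_per X r1 R) // leq_maxl.
  - by move=> i; rewrite (@Delta_per Y r2 R) // leq_maxr.
have h4 := dvMM pP (dv_pexp pP (r1 + r2) (pint1 pP)) h3; rewrite mulr1 in h4.
have HR : (R <= r1 + r2)%N by rewrite geq_max leq_addr leq_addl.
apply: (dv_le pP) h4.
rewrite -{1}(subnKC (ltnW (leq_ltn_trans Rs (ltnSn s')))) leq_add2r; exact: HR.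
Qed.

End Dwork.


Definition tp (n : nat) (f : series) : {poly rat} := \poly_(i < n.+1) f i.

Lemma coef_tp n f i : (i <= n)%N -> (tp n f)`_i = f i.
Proof. by move=> h; rewrite /tp coef_poly ltnS h. Qed.

Lemma smul_poly n f g m : (m <= n)%N -> smul f g m = (tp n f * tp n g)`_m.
Proof.
move=> mn; rewrite coefM /smul; apply: eq_bigr => i _.
have hi : (i <= n)%N by apply: leq_trans mn; rewrite -ltnS.
by rewrite !coef_tp // (leq_trans (leq_subr _ _) mn).
Qed.

Lemma coefM_agree n (q1 q2 r : {poly rat}) : (forall i, (i <= n)%N -> q1`_i = q2`_i) ->
  (r * q1)`_n = (r * q2)`_n.
Proof. by move=> h; rewrite !coefM; apply: eq_bigr => i _; rewrite h // leq_subr. Qed.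

Lemma inv_seq_size f n : size (inv_seq f n) = n.+1.
Proof. by elim: n => [|n IH] //=; rewrite size_rcons IH. Qed.

Lemma inv_seq_prefix f n m : (m <= n)%N -> nth 0 (inv_seq f n) m = sinv f m.
Proof.
rewrite /sinv; elim: n => [|n IH]; first by rewrite leqn0 => /eqP ->.
rewrite leq_eqVlt => /orP[/eqP -> // | h].
by rewrite /= nth_rcons inv_seq_size h IH.
Qed.

Lemma sinvS f n : sinv f n.+1 = - (\sum_(i < n.+1) f i.+1 * sinv f (n - i)%N) / f 0%N.
Proof.
rewrite {1}/sinv /= nth_rcons inv_seq_size ltnn eqxx; congr (- _ / _).
by apply: eq_bigr => i _; rewrite inv_seq_prefix // leq_subr.
Qed.

Lemma sinv0 f : sinv f 0 = (f 0%N)^-1.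
Proof. by []. Qed.

Lemma smul_inv g n : g 0%N != 0 -> smul g (sinv g) n = (n == 0%N)%:R.
Proof.
move=> g0; case: n => [|n]; first by rewrite /smul big_ord1 /= sinv0 mulfV.
rewrite /smul big_ord_recl /= subn0 sinvS.
rewrite [X in _ + X](_ : _ = \sum_(i < n.+1) g i.+1 * sinv g (n - i)%N); last first.
  by apply: eq_bigr => i _; rewrite /bump /= add1n subSS.
by rewrite mulrC divfK // addrC subrr.
Qed.

Lemma sinv_pint p : prime p -> forall g, g 0%N = 1 -> (forall n, pint p (g n)) -> forall n, pint p (sinv g n).
Proof.
move=> pP g g0 hg n; elim/ltn_ind: n => n IH.
case: n IH => [|n] IH; first by rewrite sinv0 g0 invr1; exact: pint1.
rewrite sinvS g0 divr1. apply: pintN; apply: (pint_sum pP) => i _.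
by apply: (pintM pP) => //; apply: IH; rewrite ltnS leq_subr.
Qed.

Lemma quot_cong p s (F G H K : series) : prime p ->
  G 0%N = 1 -> K 0%N = 1 ->
  (forall n, pint p (F n)) -> (forall n, pint p (G n)) ->
  (forall n, pint p (H n)) -> (forall n, pint p (K n)) ->
  (forall N, cong p s (smul F K N) (smul G H N)) ->
  forall n, cong p s (sdiv F G n) (sdiv H K n).
Proof.
move=> pP G0 K0 hF hG hH hK hc n.
set Gi := sinv G; set Ki := sinv K.
have hGi := sinv_pint pP G0 hG; have hKi := sinv_pint pP K0 hK.
pose E := fun N => smul F K N - smul G H N.
have e : sdiv F G n - sdiv H K n = smul (smul Gi Ki) E n.
  have eR : smul (smul Gi Ki) E n = ((tp n Gi * tp n Ki) * (tp n F * tp n K - tp n G * tp n H))`_n.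
    rewrite (smul_poly _ _ (leqnn n)).
    rewrite (@coefM_agree n (tp n E) (tp n F * tp n K - tp n G * tp n H) (tp n (smul Gi Ki))); last first.
      by move=> i hi; rewrite coef_tp // /E coefB -(smul_poly F K hi) -(smul_poly G H hi).
    rewrite mulrC (@coefM_agree n (tp n (smul Gi Ki)) (tp n Gi * tp n Ki)); last first.
      by move=> i hi; rewrite coef_tp // (smul_poly Gi Ki hi).
    by rewrite mulrC.
  rewrite eR /sdiv (smul_poly F Gi (leqnn n)) (smul_poly H Ki (leqnn n)).
  rewrite [in RHS]mulrC.
  rewrite mulrBl coefB.
  have e1 : (tp n F * tp n K * (tp n Gi * tp n Ki))`_n = (tp n F * tp n Gi)`_n.
    rewrite mulrACA -[in RHS](mulr1 (tp n F * tp n Gi)).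
    apply: coefM_agree => i hi; rewrite -smul_poly // smul_inv; last by rewrite K0 oner_eq0.
    by rewrite coef1.
  have e2 : (tp n G * tp n H * (tp n Gi * tp n Ki))`_n = (tp n H * tp n Ki)`_n.
    rewrite mulrACA mulrC -[in RHS](mulr1 (tp n H * tp n Ki)).
    apply: coefM_agree => i hi; rewrite -smul_poly // smul_inv; last by rewrite G0 oner_eq0.
    by rewrite coef1.
  by rewrite e1 e2.
rewrite /cong e /smul; apply: (dv_sum pP) => i _; apply: (dvMl pP).
  by apply: (pint_sum pP) => j _; apply: (pintM pP).
exact: hc.
Qed.


Lemma boolM (b1 b2 : bool) : ((b1 && b2)%:R : rat) = b1%:R * b2%:R.
Proof. by case: b1; case: b2; rewrite /= ?mul1r ?mul0r. Qed.

Lemma smul_box f g N B : (N < B)%N -> smul f g N = box B N (fun i j => f i * g j).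
Proof. by move=> h; rewrite box_eq // big_mkord. Qed.

Section Coef.
Variable p : nat.
Hypothesis pP : prime p.

Lemma p_pos : (0 < p)%N. Proof. exact: prime_gt0. Qed.

Lemma eq_split u c v N : (c < p)%N ->
  ((p * u + c + p * v)%N == N) = (c == N %% p)%N && ((u + v)%N == N %/ p)%N.
Proof.
move=> cp; apply/eqP/andP.
  move=> <-; have -> : (p * u + c + p * v = (u + v) * p + c)%N by ring.
  rewrite modnMDl modn_small // divnMDl ?p_pos // divn_small // addn0; by split.
move=> [/eqP hc /eqP huv]; rewrite [RHS](divn_eq N p) -huv hc; ring.
Qed.

Lemma pick4 U (T : nat -> nat -> nat -> nat -> rat) (T' : nat -> nat -> rat) c0 d0 :
  (c0 < p)%N -> (d0 < p)%N ->
  (forall u c v d, (c < p)%N -> (d < p)%N -> T u c v d = (c == c0)%:R * ((d == d0)%:R * T' u v)) ->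
  \sum_(0 <= u < U) \sum_(0 <= c < p) \sum_(0 <= v < U) \sum_(0 <= d < p) T u c v d =
  \sum_(0 <= u < U) \sum_(0 <= v < U) T' u v.
Proof.
move=> hc0 hd0 h; apply: eq_bigr => u _.
transitivity (\sum_(0 <= c < p) (c == c0)%:R * \sum_(0 <= v < U) \sum_(0 <= d < p) (d == d0)%:R * T' u v).
  apply: eq_big_nat => c /andP[_ hc]; rewrite mulr_sumr; apply: eq_bigr => v _.
  rewrite mulr_sumr; apply: eq_big_nat => d /andP[_ hd]; by rewrite h.
rewrite sum_pick //; apply: eq_bigr => v _; by rewrite sum_pick.
Qed.

Variable A : series.
Variable s : nat.
Hypothesis hs : (1 <= s)%N.
Variable N : nat.
Variable R : nat -> rat.
Hypothesis eR : forall n, A (N %% p + p * n)%N = A n * R n.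

Let Q := (p ^ s.-1)%N.
Let a := (N %% p)%N.
Let M := (N %/ p)%N.

Lemma ap : (a < p)%N. Proof. exact: ltn_pmod p_pos. Qed.

Lemma ps : (p ^ s = p * Q)%N.
Proof. by rewrite /Q -expnS prednK. Qed.

Lemma coef_id :
  smul A (subst_pow p (strunc (p ^ s.-1) A)) N - smul (subst_pow p A) (strunc (p ^ s) A) N
  = D A Q R (fun _ => 1) M.
Proof.
have NB : (N < p * N.+1)%N by apply: (leq_trans (ltnSn N)); rewrite leq_pmull // p_pos.
rewrite !(smul_box _ _ NB) !box_split.
rewrite (@pick4 _ _ (fun u v => ((u + v)%N == M)%:R * (A (p * u + a)%N * ((v < Q)%N%:R * A v))) a 0 ap p_pos); last first.
  move=> u c v d hc hd.
  rewrite /subst_pow /strunc.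
  have -> : (p %| p * v + d)%N = (d == 0)%N.
    by rewrite dvdn_addr ?dvdn_mulr //; case: (eqVneq d 0) => [->|dn]; [rewrite dvdn0 | rewrite gtnNdvd // lt0n].
  case: (eqVneq d 0) => [->|dn]; last by rewrite /= !(mulr0, mul0r).
  rewrite addn0 mulKn ?p_pos // eq_split // -/a -/M.
  case: (eqVneq c a) => [->|cn]; last by rewrite /= !mul0r.
  by rewrite /= -/Q; case: ifP => _ /=; ring.
rewrite (@pick4 _ _ (fun u v => ((v + u)%N == M)%:R * (A u * ((v < Q)%N%:R * A (p * v + a)%N))) 0 a p_pos ap); last first.
  move=> u c v d hc hd.
  rewrite /subst_pow /strunc.
  have -> : (p %| p * u + c)%N = (c == 0)%N.
    by rewrite dvdn_addr ?dvdn_mulr //; case: (eqVneq c 0) => [->|cn]; [rewrite dvdn0 | rewrite gtnNdvd // lt0n].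
  case: (eqVneq c 0) => [->|cn]; last by rewrite /= !(mulr0, mul0r).
  rewrite addn0 mulKn ?p_pos //.
  have -> : (p * u + (p * v + d) = p * v + d + p * u)%N by ring.
  rewrite eq_split // -/a -/M ps lt_mul_add //.
  case: (eqVneq d a) => [->|dn]; last by rewrite /= !(mulr0, mul0r).
  by rewrite /= -/Q; case: ifP => _ /=; ring.
rewrite [X in _ - X]exchange_big /=.
have MN : (M < N.+1)%N by rewrite ltnS /M leq_div.
rewrite (D_box _ _ _ _ MN) /box -sumrB; apply: eq_bigr => u _; rewrite -sumrB.
apply: eq_bigr => v _; rewrite (addnC (p * u)%N) /a eR; ring.
Qed.

End Coef.


Section Gamma.
Variable p : nat.
Hypothesis pP : prime p.

Lemma natcong E x y : (x = y %[mod p ^ E])%N -> cong p E x%:R y%:R.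
Proof.
move=> h; rewrite /cong /dv.
have -> : (x%:R - y%:R : rat) = ((x %/ p ^ E)%N%:R - (y %/ p ^ E)%N%:R) * (p ^ E)%N%:R.
  by rewrite {1}(divn_eq x (p ^ E)) {1}(divn_eq y (p ^ E)) h !natrD !natrM; ring.
rewrite mulfK ?(pexp_neq0 pP) //; apply: (pintB pP); exact: (pint_nat pP).
Qed.

Lemma cong_cancel E a b (u : nat) : ~~ (p %| u)%N -> cong p E (a * u%:R) (b * u%:R) -> cong p E a b.
Proof.
move=> pu h; have := dv_divn pP pu h; rewrite -mulrBl mulfK; [exact: id | exact: ndvd_neq0 pu].
Qed.

Lemma cong_div E x y x' y' : ~~ (p %| y)%N -> ~~ (p %| y')%N ->
  cong p E (x * y'%:R) (x' * y%:R) -> cong p E (x / y%:R) (x' / y'%:R).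
Proof.
move=> py py' h; have hy := ndvd_neq0 py; have hy' := ndvd_neq0 py'.
have := dv_divn pP py' (dv_divn pP py h).
rewrite /cong; congr dv; field; by rewrite hy hy'.
Qed.

Lemma congX E x y n : pint p x -> pint p y -> cong p E x y -> cong p E (x ^+ n) (y ^+ n).
Proof.
move=> hx hy h; elim: n => [|n IH]; first by rewrite !expr0; exact: cong_refl.
by rewrite !exprS; apply: (congM pP) => //; apply: pintX.
Qed.

Definition fu (j : nat) : nat := if (p %| j)%N then 1%N else j.
Definition gs (m : nat) : nat := (\prod_(0 <= j < m) fu j.+1)%N.

Lemma fu_ndvd j : ~~ (p %| fu j)%N.
Proof.
rewrite /fu; case: ifP => h; last by rewrite h.
by rewrite dvdn1; apply/eqP => e; move: pP; rewrite e.
Qed.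

Lemma gs_ndvd m : ~~ (p %| gs m)%N.
Proof.
rewrite /gs; elim: m => [|m IH]; first by rewrite big_geq // dvdn1; apply/eqP => e; move: pP; rewrite e.
by rewrite big_nat_recr //= Euclid_dvdM // negb_or IH fu_ndvd.
Qed.

Lemma fact_decomp m : (m`! = p ^ (m %/ p) * (m %/ p)`! * gs m)%N.
Proof.
have p0 := prime_gt0 pP.
elim: m => [|m IH]; first by rewrite div0n /gs big_geq.
rewrite factS IH /gs big_nat_recr //= -/(gs m) divnS // /fu.
case: ifP => h /=.
  rewrite add1n factS expnS.
  have e : (m.+1 = p * (m %/ p).+1)%N.
    by rewrite -[LHS](divnK h) divnS // h add1n mulnC.
  rewrite {1}e; ring.
by rewrite add0n; ring.
Qed.

Definition Hb (P x : nat) : nat := (\prod_(0 <= j < P) fu (x + j).+1)%N.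

Lemma gs_add x P : (gs (x + P) = gs x * Hb P x)%N.
Proof.
rewrite /gs (@big_cat_nat _ _ _ x) //=; last exact: leq_addr.
congr (_ * _)%N; rewrite -{1}[x]add0n big_addn addKn /Hb.
by apply: eq_bigr => j _; rewrite addnC.
Qed.

Lemma Hb_step P x : (Hb P x.+1 * fu x.+1 = Hb P x * fu (x + P).+1)%N.
Proof.
transitivity (\prod_(0 <= j < P.+1) fu (x + j).+1)%N.
  rewrite big_nat_recl //= addn0 mulnC; congr (_ * _)%N.
  by apply: eq_bigr => j _; rewrite addSnnS.
by rewrite big_nat_recr.
Qed.

Lemma fu_shift E x : (0 < E)%N -> (fu (x + p ^ E) = fu x %[mod p ^ E])%N.
Proof.
move=> E0; rewrite /fu.
have -> : (p %| x + p ^ E)%N = (p %| x)%N by rewrite dvdn_addl // dvdn_exp // .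
by case: ifP => // _; rewrite modnDr.
Qed.

Lemma Hb_cong E x : (0 < E)%N -> cong p E (Hb (p ^ E) x)%:R (gs (p ^ E))%:R.
Proof.
move=> E0; elim: x => [|x IH].
  by rewrite /Hb /gs; under eq_bigr do rewrite add0n; exact: cong_refl.
apply: (cong_trans pP) IH.
apply: (@cong_cancel _ _ _ (fu x.+1) (fu_ndvd x.+1)).
rewrite -!natrM Hb_step !natrM; apply: (congM pP).
- exact: (pint_nat pP).
- exact: (pint_nat pP).
- exact: cong_refl.
by apply: natcong; rewrite -addSn fu_shift.
Qed.

Lemma gs_shift E x L : (0 < E)%N -> cong p E (gs (x + L * p ^ E))%:R ((gs x)%:R * (gs (p ^ E))%:R ^+ L).
Proof.
move=> E0; elim: L => [|L IH]; first by rewrite mul0n addn0 expr0 mulr1; exact: cong_refl.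
rewrite mulSn addnCA addnC gs_add natrM exprSr mulrA.
apply: (congM pP).
- exact: (pint_nat pP).
- exact: (pint_nat pP).
- exact: IH.
exact: Hb_cong.
Qed.

Lemma euler_w k e : ~~ (p %| k)%N -> ((k ^ (k * (p - 1))) ^ (p ^ e) = 1 %[mod p ^ e.+1])%N.
Proof.
move=> pk.
have cop : coprime (k ^ k) (p ^ e.+1) by apply: coprimeXl; apply: coprimeXr; rewrite coprime_sym prime_coprime.
have := Euler_exp_totient cop; rewrite totient_pfactor //= subn1 -expnM -expnM.
by rewrite mulnA.
Qed.

End Gamma.


Lemma fact_add m l : ((m + l)`! = m`! * \prod_(0 <= j < l) (m + j).+1)%N.
Proof.
elim: l => [|l IH]; first by rewrite addn0 big_geq // muln1.
by rewrite addnS factS IH big_nat_recr //=; ring.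
Qed.

Definition PP (k n : nat) : nat := (\prod_(1 <= j < k) \prod_(0 <= i < n) (j + k * i))%N.

Lemma fact_kn k n : (0 < k)%N -> ((k * n)`! = PP k n * k ^ n * n`!)%N.
Proof.
move=> k0; elim: n => [|n IH]; first by rewrite muln0 /PP big1 // => j _; rewrite big_geq.
rewrite mulnS addnC fact_add IH /PP.
have e1 : (\prod_(1 <= j < k) \prod_(0 <= i < n.+1) (j + k * i) =
   (\prod_(1 <= j < k) \prod_(0 <= i < n) (j + k * i)) * \prod_(1 <= j < k) (j + k * n))%N.
  by rewrite -big_split; apply: eq_bigr => j _; rewrite big_nat_recr.
rewrite e1 expnS factS.
have -> : (\prod_(0 <= j < k) (k * n + j).+1 = (\prod_(1 <= j < k) (j + k * n)) * (k * n.+1))%N.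
  rewrite -(prednK k0) big_nat_recr //= big_add1 /=.
  by congr (_ * _)%N; [apply: eq_bigr => j _; ring | ring].
ring.
Qed.

Lemma hypF_fact k n : (0 < k)%N ->
  hypF k n = (k * n)`!%:R / ((k ^ (k * n))%:R * (n`!%:R) ^+ k).
Proof.
move=> k0; have kq : (k%:R : rat) != 0 by rewrite pnatr_eq0 -lt0n.
have nq : (n`!%:R : rat) != 0 by rewrite pnatr_eq0 -lt0n fact_gt0.
rewrite /hypF /pochhammer.
rewrite (eq_bigr (fun j => (\prod_(0 <= i < n) (j + k * i))%N%:R / (k%:R ^+ n))); last first.
  move=> j _; have -> : (k%:R ^+ n : rat) = \prod_(0 <= i < n) k%:R by rewrite prodr_const_nat subn0.
  rewrite natr_prod -prodf_div big_mkord.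
  apply: eq_bigr => i _; rewrite natrD natrM; field; exact: kq.
rewrite prodf_div prodr_const_nat -natr_prod -/(PP k n) fact_kn //.
rewrite !natrM !natrX mulnC exprM.
move: kq k0; case: k => // k' kq _; rewrite subn1 /= !exprS; field.
by rewrite nq !expf_neq0.
Qed.


Section Rec.
Variable p : nat.
Hypothesis pP : prime p.
Variable k : nat.
Hypothesis k0 : (0 < k)%N.
Hypothesis pk : ~~ (p %| k)%N.

Let p0 : (0 < p)%N := prime_gt0 pP.

Definition qq b := ((k * b) %/ p)%N.
Definition ww := (k ^ (k * (p - 1)))%N.
Definition U1 b n := (p ^ qq b * \prod_(0 <= i < qq b) (k * n + i).+1)%N.
Definition U2 b n := gs p (k * (b + p * n)).
Definition VV b n := (k ^ (k * b) * ww ^ n * gs p (b + p * n) ^ k)%N.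
Definition Rb b n : rat := (U1 b n * U2 b n)%N%:R / (VV b n)%:R.

Lemma VV_ndvd b n : ~~ (p %| VV b n)%N.
Proof.
rewrite /VV /ww !Euclid_dvdM // !Euclid_dvdX // !negb_or (negbTE pk) /=.
by rewrite (negbTE (gs_ndvd pP _)).
Qed.

Lemma rec b n : (b < p)%N -> hypF k (b + p * n) = hypF k n * Rb b n.
Proof.
move=> bp; rewrite !hypF_fact //.
have e1 : ((k * (b + p * n))`! = p ^ (k * n + qq b) * (k * n + qq b)`! * gs p (k * (b + p * n)))%N.
  move: (fact_decomp pP (k * (b + p * n))).
  have -> : ((k * (b + p * n)) %/ p = k * n + qq b)%N.
    by rewrite /qq -divnMDl // ; congr (_ %/ _)%N; ring.
  by [].
have e2 : ((b + p * n)`! = p ^ n * n`! * gs p (b + p * n))%N.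
  move: (fact_decomp pP (b + p * n)).
  have -> : ((b + p * n) %/ p = n)%N by rewrite addnC mulnC divnMDl // divn_small // addn0.
  by [].
have e3 := fact_add (k * n) (qq b).
have e4 : (k ^ (k * (b + p * n)) = k ^ (k * b) * ww ^ n * k ^ (k * n))%N.
  rewrite /ww -!expnM -!expnD; congr (_ ^ _)%N.
  move: p0; case: (p) => // p' _; rewrite subn1 /=; ring.
rewrite e1 e2 e3 e4 /Rb /U1 /U2 /VV.
have kq : (k%:R : rat) != 0 by rewrite pnatr_eq0 -lt0n.
have nq : (n`!%:R : rat) != 0 by rewrite pnatr_eq0 -lt0n fact_gt0.
have knq : ((k * n)`!%:R : rat) != 0 by rewrite pnatr_eq0 -lt0n fact_gt0.
have pq : (p%:R : rat) != 0 by rewrite pnatr_eq0 -lt0n.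
have g1 : ((gs p (b + p * n))%:R : rat) != 0 by apply: ndvd_neq0; apply: gs_ndvd.
have wq : ((ww)%:R : rat) != 0 by rewrite pnatr_eq0 -lt0n /ww expn_gt0 k0.
rewrite !natrM !natrX !exprD !exprMn.
have -> : (p%:R ^+ (k * n) : rat) = p%:R ^+ n ^+ k by rewrite mulnC exprM.
field.
by rewrite !expf_neq0.
Qed.


Lemma cong_addmul E x L : cong p E ((x + L * p ^ E)%N%:R) (x%:R).
Proof. by apply: (natcong pP); rewrite addnC modnMDl. Qed.

Let W e : rat := (gs p (p ^ e.+1))%:R.

Lemma U1_cong b n m e : cong p e.+1 (U1 b (n + m * p ^ e))%:R (U1 b n)%:R.
Proof.
case: (posnP (qq b)) => [q0 | qpos].
  by rewrite /U1 q0 !big_geq //; exact: (cong_refl pP).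
rewrite /U1 !natrM /cong -mulrBr.
have hP : cong p e (\prod_(0 <= i < qq b) (k * (n + m * p ^ e) + i).+1)%N%:R
                   (\prod_(0 <= i < qq b) (k * n + i).+1)%N%:R.
  rewrite !natr_prod; apply: (cong_prod pP).
  - by move=> i _; exact: (pint_nat pP).
  - by move=> i _; exact: (pint_nat pP).
  move=> i _; have -> : ((k * (n + m * p ^ e) + i).+1 = (k * n + i).+1 + (k * m) * p ^ e)%N by ring.
  exact: cong_addmul.
have := dvMM pP (dv_pexp pP (qq b) (pint1 pP)) hP; rewrite mulr1 => h.
by apply: (dv_le pP) h; rewrite addnC -addn1 leq_add2l.
Qed.

Lemma U2_cong b n m e : cong p e.+1 (U2 b (n + m * p ^ e))%:R ((U2 b n)%:R * W e ^+ (k * m)).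
Proof.
rewrite /U2; have -> : (k * (b + p * (n + m * p ^ e)) = k * (b + p * n) + (k * m) * p ^ e.+1)%N.
  by rewrite expnS; ring.
exact: gs_shift.
Qed.

Lemma ww_cong n m e : cong p e.+1 (ww ^ (n + m * p ^ e))%N%:R (ww ^ n)%N%:R.
Proof.
apply: (natcong pP); rewrite expnD (mulnC m) expnM -modnMmr -modnXm /ww euler_w // modnXm exp1n.
by rewrite modnMmr muln1.
Qed.

Ltac pintac pP := repeat first [ exact: (pint_nat pP) | apply: (pintM pP) | apply: (pintX pP) ].

Lemma VV_cong b n m e : cong p e.+1 (VV b (n + m * p ^ e))%:R ((VV b n)%:R * W e ^+ (m * k)).
Proof.
rewrite /VV; have -> : (b + p * (n + m * p ^ e) = (b + p * n) + m * p ^ e.+1)%N by rewrite expnS; ring.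
rewrite !natrM -!mulrA; apply: (congM pP); [pintac pP | pintac pP | exact: (cong_refl pP) |].
rewrite (natrX _ (gs p (b + p * n + m * p ^ e.+1))) (natrX _ (gs p (b + p * n))).
rewrite exprM -exprMn; apply: (congM pP); [pintac pP | pintac pP | |].
  exact: ww_cong.
apply: (congX pP); [pintac pP | pintac pP | exact: gs_shift].
Qed.

Lemma Rb_DP b : DP p (Rb b).
Proof.
split.
  move=> n; apply: (pint_divn pP); [exact: VV_ndvd | exact: (pint_nat pP)].
move=> n m e; rewrite /Rb; apply: (cong_div pP); [exact: VV_ndvd | exact: VV_ndvd |].
apply: (cong_trans pP (y := (U1 b n)%:R * ((U2 b n)%:R * W e ^+ (k * m)) * (VV b n)%:R)).
  rewrite natrM; apply: (congM pP); [pintac pP | pintac pP | | exact: (cong_refl pP)].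
  by apply: (congM pP); [pintac pP | pintac pP | exact: U1_cong | exact: U2_cong].
apply: cong_sym.
have -> : (U1 b n)%:R * ((U2 b n)%:R * W e ^+ (k * m)) * (VV b n)%:R =
          (U1 b n * U2 b n)%N%:R * ((VV b n)%:R * W e ^+ (m * k)) by rewrite natrM mulnC; ring.
apply: (congM pP); [pintac pP | pintac pP | exact: (cong_refl pP) | exact: VV_cong].
Qed.

End Rec.


Lemma hypF0 k : hypF k 0 = 1.
Proof.
rewrite /hypF /pochhammer big1 ?expr1n ?divr1 // => j _; by rewrite big_ord0.
Qed.

Theorem mainTheorem2 (k p : nat) :
  (2 <= k)%N -> prime p -> odd p -> ~~ (p %| k)%N ->
  (forall n : nat, p_integral p (hypF k n)) /\
  (forall s : nat, (1 <= s)%N -> forall n : nat,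
     congr_mod_pow p s
       (sdiv (hypF k) (subst_pow p (hypF k)) n)
       (sdiv (strunc (p ^ s) (hypF k))
             (subst_pow p (strunc (p ^ s.-1) (hypF k))) n)).
Proof.
move=> hk pP _ pk.
have k0 : (0 < k)%N by apply: leq_trans hk.
have p0 : (0 < p)%N := prime_gt0 pP.
have hR : forall b, (b < p)%N -> exists R, DP p R /\ forall n, hypF k (b + p * n)%N = hypF k n * R n.
  move=> b bp; exists (Rb p k b); split; first exact: Rb_DP.
  by move=> n; have := rec pP k0 n bp.
have hA : forall n, pint p (hypF k n).
  elim/ltn_ind => n IH; case: (posnP n) => [-> | npos].
    by rewrite hypF0; exact: (pint1 pP).
  have [R [[hR1 _] eR]] := hR _ (ltn_pmod n p0).
  rewrite {1}(divn_eq n p) addnC mulnC eR; apply: (pintM pP); last exact: hR1.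
  apply: IH; apply: ltn_Pdiv => //; exact: prime_gt1.
split; first by move=> n; apply/(pintE pP).
move=> s hs n; rewrite /congr_mod_pow; apply/(pintE pP).
have G0 : subst_pow p (hypF k) 0%N = 1 by rewrite /subst_pow dvdn0 div0n hypF0.
have K0 : subst_pow p (strunc (p ^ s.-1) (hypF k)) 0%N = 1.
  by rewrite /subst_pow dvdn0 div0n /strunc expn_gt0 p0 hypF0.
have pG : forall n, pint p (subst_pow p (hypF k) n).
  by move=> m; rewrite /subst_pow; case: ifP => _; [exact: hA | exact: (pint0 pP)].
have pH : forall n, pint p (strunc (p ^ s) (hypF k) n).
  by move=> m; rewrite /strunc; case: ifP => _; [exact: hA | exact: (pint0 pP)].
have pK : forall n, pint p (subst_pow p (strunc (p ^ s.-1) (hypF k)) n).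
  move=> m; rewrite /subst_pow /strunc; case: ifP => _; last exact: (pint0 pP).
  by case: ifP => _; [exact: hA | exact: (pint0 pP)].
apply: (quot_cong pP G0 K0 hA pG pH pK) => N.
have [R [hRd eR]] := hR _ (ltn_pmod N p0).
rewrite /cong (coef_id pP hs eR).
exact: (dwork pP hA hR hs hRd (DP_const pP (pint1 pP))).
Qed.
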